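(* Let $X$ be a real reflexive Banach space and let $\Omega_1,\Omega_2\subset X$ be closed convex sets such that $\operatorname{int}(\Omega_1-\Omega_2)\neq\emptyset$ and $0\in\operatorname{core}(\Omega_1-\Omega_2)$. Then for every $\bar x\in\Omega_1\cap\Omega_2$ there exists a bounded convex neighborhood $V$ of $\bar x$ such that $0\in\operatorname{int}\big(\Omega_1-(\Omega_2\cap V)\big)$.
   Context: For sets $A,B$, $A-B=\{a-b\mid a\in A,b\in B\}$; $\operatorname{int}$ is the topological interior. The (algebraic) core of a set $\Omega\subset X$ is $\operatorname{core}\Omega=\{x\in\Omega\mid \forall v\in X\ \exists\gamma>0 \text{ such that } x+tv\in\Omega \text{ whenever } |t|<\gamma\}$. *)

(* Defs.v *)
From HB Require Import structures.
From mathcomp Require Import all_boot all_order all_algebra.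
From mathcomp Require Import all_classical all_reals all_analysis.
Set Implicit Arguments. Unset Strict Implicit. Unset Printing Implicit Defensive.
Import Order.TTheory GRing.Theory Num.Theory.
Import numFieldNormedType.Exports.
Local Open Scope classical_set_scope.
Local Open Scope ring_scope.

Definition setMinus {R : numDomainType} {X : lmodType R} (A B : set X) : set X :=
  [set z | exists a, exists b, A a /\ B b /\ z = a - b].

Definition core {R : realType} {X : normedModType R} (O : set X) : set X :=
  [set x | O x /\ forall v : X, exists2 g : R, 0 < g &
       forall t : R, `|t| < g -> O (x + t *: v)].

Definition convexS {R : realType} {X : normedModType R} (A : set X) : Prop :=
  @convex_set R X (A : set (convex_lmodType X)).

Definition dual_elt {R : realType} {X : normedModType R} (f : X -> R) : Prop :=
  linear_for *%R f /\ continuous f.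

(* phi : X* -> R is a bounded linear functional on X* (w.r.t. the operator norm):
   linear on X*, and there is C with |phi f| <= C * M whenever |f x| <= M ||x|| for all x
   (i.e. |phi f| <= C ||f||_{X*}). *)
Definition bidual_elt {R : realType} {X : normedModType R} (phi : (X -> R) -> R) : Prop :=
  (forall f g, dual_elt f -> dual_elt g -> phi (f \+ g) = phi f + phi g) /\
  (forall (a : R) f, dual_elt f -> phi (fun x => a * f x) = a * phi f) /\
  exists C : R, forall f (M : R), dual_elt f ->
     (forall x, `|f x| <= M * `|x|) -> `|phi f| <= C * M.

Definition reflexive_space {R : realType} (X : normedModType R) : Prop :=
  forall phi : (X -> R) -> R, bidual_elt phi ->
    exists x : X, forall f, dual_elt f -> phi f = f x.

(* Main.v *)
Require Import Defs.
From HB Require Import structures.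
From mathcomp Require Import all_boot all_order all_algebra.
From mathcomp Require Import all_classical all_reals all_analysis.
Import Order.TTheory GRing.Theory Num.Theory.
Import numFieldNormedType.Exports.
Local Open Scope classical_set_scope.
Local Open Scope ring_scope.
Lemma half_comb {R : realType} {X : normedModType R} {A : set X} {c : nat -> X} :
  (forall x y, A x -> A y -> A (2^-1 *: x + 2^-1 *: y)) -> (forall k, A (c k)) ->
  forall n p, A p -> A (\sum_(k < n) ((2:R)^-1)^+k.+1 *: c k + ((2:R)^-1)^+n *: p).
Proof.
move=> hA hc; elim=> [|n IH] p Ap.
  by rewrite big_ord0 add0r expr0 scale1r.
rewrite big_ord_recr /= -addrA.
have -> : ((2:R)^-1)^+n.+1 *: c n + ((2:R)^-1)^+n.+1 *: p =
   ((2:R)^-1)^+n *: (2^-1 *: c n + 2^-1 *: p) by rewrite scalerDr !scalerA -exprSr.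
exact/IH/hA.
Qed.
Lemma convexSP {R : realType} {X : normedModType R} {A : set X} :
  convexS A -> forall (x y : X) (l : R), 0 <= l -> l <= 1 -> A x -> A y ->
  A (l *: x + (1 - l) *: y).
Proof.
move=> cA x y l l0 l1 Ax Ay.
have sp : Itv.spec (@Itv.num_sem R) (Itv.Real `[0, 1]%Z) l.
  rewrite /Itv.spec /Itv.num_sem /= num_real /= in_itv /=. by rewrite l0 l1.
pose t : {i01 R} := Itv.mk sp.
have := cA x y t; rewrite !inE => /(_ Ax Ay).
done.
Qed.
From mathcomp Require Import ring lra.

Lemma iter_lemma (R : realType) (X : completeNormedModType R) (O1 O2 : set X)
  (xbar : X) (eps : R) :
  closed O1 -> closed O2 -> convexS O1 -> convexS O2 -> 0 < eps ->
  (O1 `&` O2) xbar ->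
  (forall y, `|y| < eps -> exists a b, O1 a /\ O2 b /\ `|xbar - b| < 1 /\
       `|y - (a - b)| < eps / 2) ->
  forall y, `|y| < eps -> exists a b, O1 a /\ O2 b /\ `|xbar - b| <= 1 /\
       2^-1 *: y = a - b.
Proof.
move=> cO1 cO2 vO1 vO2 e0 xO H y ye.
have hex : forall w, exists p : X * X, `|w| < eps -> O1 p.1 /\ O2 p.2 /\
     `|xbar - p.2| < 1 /\ `|w - (p.1 - p.2)| < eps / 2.
  move=> w; have [wl|wl] := ltP `|w| eps.
    by have [a [b hab]] := H w wl; exists (a, b).
  by exists (0, 0).
have [f hf] := choice hex.
pose g w := 2 *: (w - ((f w).1 - (f w).2)).
pose ys n := iter n g y.
have ysb : forall n, `|ys n| < eps.
  elim=> [|n IH] //=.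
  have [_ [_ [_ h]]] := hf _ IH.
  rewrite /g normrZ ger0_norm //; lra.
pose a n := (f (ys n)).1; pose b n := (f (ys n)).2.
pose w n := ((2:R)^-1)^+n.
pose sa n := \sum_(k < n) w k.+1 *: a k.
pose sb n := \sum_(k < n) w k.+1 *: b k.
have F2 : forall n, sa n - sb n = 2^-1 *: y - w n.+1 *: ys n.
  elim=> [|n IH]; first by rewrite /sa /sb /w /ys /= !big_ord0 subr0 expr1 subrr.
  have -> : sa n.+1 - sb n.+1 = (sa n - sb n) + w n.+1 *: (a n - b n).
    by rewrite /sa /sb !big_ord_recr /= scalerBr opprD addrACA.
  rewrite IH /= -/(ys n) /g scalerA.
  have -> : w n.+2 * 2 = w n.+1 by rewrite /w exprSr -mulrA mulVf ?mulr1.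
  by rewrite -/(a n) -/(b n) [in RHS]scalerBr opprB [in RHS]addrA addrAC.
have wge0 n : 0 <= w n by rewrite /w exprn_ge0.
have wS n : w n.+1 <= w n.
  by rewrite /w exprSr ler_piMr ?exprn_ge0 // invf_le1 // ler1n.
have hb k : O1 (a k) /\ O2 (b k) /\ `|xbar - b k| < 1 := (let: conj h1 (conj h2 (conj h3 _)) := hf _ (ysb k) in conj h1 (conj h2 h3)).
have bb k : `|b k| <= `|xbar| + 1.
  have [_ [_ h]] := hb k.
  have -> : b k = xbar - (xbar - b k) by rewrite opprB addrC subrK.
  by rewrite (le_trans (ler_normB _ _)) // lerD2l ltW.
pose u k := w k.+1 *: b k.
have cu : cvgn (series u).
  apply: normed_cvg.
  rewrite /normed_series_of /=.
  apply: (@series_le_cvg R _ (geometric (`|xbar| + 1) (2^-1 : R))); last first.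
    by apply: is_cvg_geometric_series; rewrite ger0_norm // invf_lt1 // ltr1n.
  - move=> n /=; rewrite /u normrZ ger0_norm // /geometric /= [X in _ <= X]mulrC.
    by apply: ler_pM => //; rewrite ?wS ?bb.
  - by move=> n; rewrite geometric_ge0 // addr_ge0.
  - by move=> n.
pose bst := limn (series u).
have sbE n : sb n = series u n by rewrite /series /= big_mkord.
have cw : w @ \oo --> 0 by apply: cvg_expr; rewrite ger0_norm // invf_lt1 // ltr1n.
have cbeta : (fun n => sb n + w n *: xbar) @ \oo --> bst.
  rewrite -[bst]addr0; apply: cvgD.
    suff -> : sb = series u by exact: cu.
    by apply/funext => n; exact: sbE.
  by rewrite -(scale0r xbar); apply: cvgZl.
pose A2 := O2 `&` [set z | `|xbar - z| <= 1].
have cA2 : closed A2 by apply: closedI => //; exact: closed_closed_ball_.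
have half x : 2^-1 *: x + 2^-1 *: x = x :> X.
  by rewrite -scalerDl -[in X in X *: _](div1r 2) -splitr scale1r.
have h12 : (1 - 2^-1 : R) = 2^-1 by rewrite {1}(splitr 1) div1r addrK.
have i0 : (0:R) <= 2^-1 by rewrite invr_ge0.
have i1 : (2^-1:R) <= 1 by rewrite invf_le1 ?ler1n.
have mid1 x z : O1 x -> O1 z -> O1 (2^-1 *: x + 2^-1 *: z).
  by move=> hx hz; have := convexSP vO1 x z (2^-1) i0 i1 hx hz; rewrite h12.
have mid2 x z : A2 x -> A2 z -> A2 (2^-1 *: x + 2^-1 *: z).
  move=> [hx bx] [hz bz]; split.
    by have := convexSP vO2 x z (2^-1) i0 i1 hx hz; rewrite h12.
  rewrite /= -{1}(half xbar) opprD addrACA -!scalerBr.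
  rewrite (le_trans (ler_normD _ _)) // !normrZ ger0_norm // -mulrDr.
  by apply: (le_trans (ler_wpM2l i0 (lerD bx bz))); lra.
have inA2 n : A2 (sb n + w n *: xbar).
  apply: (half_comb mid2) => [k|].
    have [_ [h1 h2]] := hb k; split => //; exact: ltW.
  by have [_ ?] := xO; split => //=; rewrite subrr normr0.
have inA1 n : O1 (sa n + w n *: xbar).
  apply: (half_comb mid1) => [k|]; first by have [] := hb k.
  by have [] := xO.
have bA2 : A2 bst.
  by apply: (closed_cvg _ cA2 _ _ cbeta); apply: nearW.
have cys : (fun n => w n.+1 *: ys n) @ \oo --> 0.
  apply/cvgr0Pnorm_lt => e ep.
  have hw := proj1 (cvgr0Pnorm_lt _) cw (e / eps) (divr_gt0 ep e0).
  near=> n.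
  have hn : `|w n| < e / eps by near: n; exact: hw.
  rewrite normrZ ger0_norm //.
  have hn' : w n < e / eps by rewrite -[w n]ger0_norm.
  apply: (le_lt_trans (ler_pM (wge0 _) (normr_ge0 _) (wS n) (ltW (ysb n)))).
  by rewrite -ltr_pdivlMr.
have calpha : (fun n => sa n + w n *: xbar) @ \oo --> bst + 2^-1 *: y.
  have -> : (fun n => sa n + w n *: xbar) =
      (fun n => (sb n + w n *: xbar) + (2^-1 *: y - w n.+1 *: ys n)).
    apply/funext => n; rewrite -F2.
    by rewrite addrAC [sb n + _]addrC subrK.
  rewrite -[X in _ --> _ + X]subr0; apply: cvgD => //.
  by apply: cvgB => //; exact: cvg_cst.
have aO1 : O1 (bst + 2^-1 *: y).
  by apply: (closed_cvg _ cO1 _ _ calpha); apply: nearW.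
exists (bst + 2^-1 *: y), bst; have [h1 h2] := bA2.
by split => //; split => //; split => //; rewrite addrC addKr.
Unshelve. all: by end_near.
Qed.

Definition Kset {R : realType} {X : normedModType R} (O1 O2 : set X) (xbar : X) :=
  setMinus O1 (O2 `&` [set z | `|xbar - z| < 1]).

Lemma K_convex {R : realType} {X : normedModType R} (O1 O2 : set X) (xbar : X) :
  convexS O1 -> convexS O2 -> forall z1 z2 (l : R), 0 <= l -> l <= 1 ->
  Kset O1 O2 xbar z1 -> Kset O1 O2 xbar z2 -> Kset O1 O2 xbar (l *: z1 + (1 - l) *: z2).
Proof.
move=> v1 v2 z1 z2 l l0 l1 [a1 [b1 [ha1 [[hb1 bb1] ->]]]] [a2 [b2 [ha2 [[hb2 bb2] ->]]]].
exists (l *: a1 + (1 - l) *: a2), (l *: b1 + (1 - l) *: b2).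
split; first exact: convexSP.
split; last by rewrite !scalerBr opprD addrACA.
split; first exact: convexSP.
have [->|ln1] := eqVneq l 1; first by rewrite subrr scale0r addr0 scale1r.
have l1' : l < 1 by rewrite lt_neqAle ln1.
have ex : xbar = l *: xbar + (1 - l) *: xbar.
  by rewrite -scalerDl addrCA subrr addr0 scale1r.
rewrite /= {1}ex.
rewrite opprD addrACA -!scalerBr (le_lt_trans (ler_normD _ _)) // !normrZ.
rewrite !ger0_norm ?subr_ge0 //.
have : l * `|xbar - b1| <= l by rewrite ler_piMr // ltW.
have : (1 - l) * `|xbar - b2| < 1 - l by rewrite gtr_pMr // subr_gt0.
lra.
Qed.

Lemma K_absorb {R : realType} {X : normedModType R} (O1 O2 : set X) (xbar : X) :
  convexS O1 -> convexS O2 -> (O1 `&` O2) xbar -> core (setMinus O1 O2) 0 ->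
  forall v, exists2 t : R, 0 < t & Kset O1 O2 xbar (t *: v).
Proof.
move=> v1 v2 [x1 x2] [_ hc] v.
have [g g0 hg] := hc v.
have := hg (g / 2); rewrite add0r.
have : `|g / 2| < g by rewrite ger0_norm ?divr_ge0 ?ltW //; lra.
move=> /[swap] /[apply] -[a [b [ha [hb e]]]].
pose lam := (`|xbar - b| + 1)^-1.
have hpos : 0 < `|xbar - b| + 1 by apply: ltr_wpDl.
have lam0 : 0 < lam by rewrite invr_gt0.
have lam1 : lam <= 1 by rewrite invf_le1 // lerDr.
exists (lam * (g / 2)); first by rewrite mulr_gt0 // divr_gt0.
exists (lam *: a + (1 - lam) *: xbar), (lam *: b + (1 - lam) *: xbar).
split; first by apply: convexSP => //; exact: ltW.
split; last by rewrite -scalerA e scalerBr opprD addrACA subrr addr0.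
split; first by apply: convexSP => //; exact: ltW.
have ex : xbar = lam *: xbar + (1 - lam) *: xbar.
  by rewrite -scalerDl addrCA subrr addr0 scale1r.
rewrite /= {1}ex opprD addrACA subrr addr0.
rewrite -scalerBr normrZ ger0_norm ?ltW // /lam.
by rewrite mulrC ltr_pdivrMr // mul1r ltrDl.
Qed.

Lemma K_baire {R : realType} {X : completeNormedModType R} (O1 O2 : set X) (xbar : X) :
  convexS O1 -> convexS O2 -> (O1 `&` O2) xbar -> core (setMinus O1 O2) 0 ->
  exists q (rho : R), 0 < rho /\ forall y, `|y - q| < rho ->
    forall eta, 0 < eta -> exists z, Kset O1 O2 xbar z /\ `|y - z| < eta.
Proof.
move=> v1 v2 xO hc.
have K0 : Kset O1 O2 xbar 0.
  have [h1 h2] := xO; exists xbar, xbar.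
  by split => //; split; [split => //=; rewrite subrr normr0 | rewrite subrr].
have star s z : 0 <= s -> s <= 1 -> Kset O1 O2 xbar z -> Kset O1 O2 xbar (s *: z).
  by move=> s0 s1 hz; have := K_convex _ _ _ v1 v2 _ _ _ s0 s1 hz K0; rewrite scaler0 addr0.
pose S n := [set x : X | Kset O1 O2 xbar ((n.+1%:R : R)^-1 *: x)].
pose F n := ~` closure (S n).
have oF n : open (F n) by apply: closed_openC; exact: closed_closure.
have : ~ (forall n, open (F n) /\ dense (F n)).
  move=> /Baire hd.
  have := hd setT (ex_intro _ 0 I) openT; rewrite setTI => -[x Fx].
  have [t t0 Kt] := K_absorb _ _ _ v1 v2 xO hc x.
  pose n := Num.truncn t^-1.
  have hn : t^-1 < n.+1%:R := truncnS_gt _.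
  apply: (Fx n I); apply: subset_closure; rewrite /S /=.
  have -> : (n.+1%:R : R)^-1 *: x = ((n.+1%:R : R)^-1 / t) *: (t *: x).
    by rewrite scalerA mulfVK // gt_eqF.
  apply: star => //; first by rewrite divr_ge0 // ltW.
  rewrite ler_pdivrMr // mul1r -[t]invrK lef_pV2 ?posrE ?invr_gt0 //.
  exact: ltW.
move=> /existsNP [n /not_andP [//|nd]].
have [U0 [[p pO] OF]] := denseNE nd.
have /nbhs_ballP [rho rho0 hb] := open_nbhs_nbhs pO.
have m0 : (0 : R) < n.+1%:R by [].
exists ((n.+1%:R : R)^-1 *: p), ((n.+1%:R : R)^-1 * rho); split.
  by rewrite mulr_gt0 // invr_gt0.
move=> y hy eta eta0.
have inO : U0 ((n.+1%:R : R) *: y).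
  apply: hb; rewrite -ball_normE /=.
  have -> : p - (n.+1%:R : R) *: y = (n.+1%:R : R) *: ((n.+1%:R : R)^-1 *: p - y).
    by rewrite scalerBr scalerA mulfV ?gt_eqF // scale1r.
  rewrite normrZ ger0_norm ?ltW // distrC -ltr_pdivlMl //.
have cl : closure (S n) ((n.+1%:R : R) *: y).
  apply: contrapT => nc.
  have : (U0 `&` F n) ((n.+1%:R : R) *: y) by [].
  by rewrite OF.
have [z' [Sz' bz']] := cl _ (nbhsx_ballx ((n.+1%:R : R) *: y) _ (mulr_gt0 m0 eta0)).
exists ((n.+1%:R : R)^-1 *: z'); split => //.
move: bz'; rewrite -ball_normE /=.
have -> : (n.+1%:R : R) *: y - z' = (n.+1%:R : R) *: (y - (n.+1%:R : R)^-1 *: z').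
  by rewrite scalerBr scalerA mulfV ?gt_eqF // scale1r.
by rewrite normrZ ger0_norm ?ltW // ltr_pM2l.
Qed.

Local Open Scope convex_scope.
Lemma normball_convex {R : realType} {X : normedModType R} (c : X) (r : R) :
  convexS [set z | `|c - z| < r].
Proof.
move=> x y lam; rewrite !inE /= => hx hy.
have l0 : 0 <= lam%:inum by apply: ge0.
have l1 : lam%:inum <= 1 by apply: le1.
set l := lam%:inum.
have -> : x <| lam |> y = l *: x + (1 - l) *: y by [].
have ex : c = l *: c + (1 - l) *: c.
  by rewrite -scalerDl addrCA subrr addr0 scale1r.
rewrite {1}ex opprD addrACA -!scalerBr (le_lt_trans (ler_normD _ _)) // !normrZ.
rewrite !ger0_norm ?subr_ge0 //.
have [->|ln1] := eqVneq l 1.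
  by rewrite subrr !mul0r addr0 mul1r.
have h2 : l * `|c - x| <= l * r by rewrite ler_wpM2l // ltW.
have h : (1 - l) * `|c - y| < (1 - l) * r by rewrite ltr_pM2l // subr_gt0 lt_neqAle ln1.
rewrite (lt_le_trans (ler_ltD h2 h)) //.
by rewrite -mulrDl addrCA subrr addr0 mul1r.
Qed.

Theorem proposition3p3 (R : realType) (X : completeNormedModType R)
  (Omega1 Omega2 : set X) :
  reflexive_space X ->
  closed Omega1 -> closed Omega2 -> convexS Omega1 -> convexS Omega2 ->
  (interior (setMinus Omega1 Omega2) !=set0) ->
  core (setMinus Omega1 Omega2) 0 ->
  forall xbar : X, (Omega1 `&` Omega2) xbar ->
  exists V : set X,
    [/\ nbhs xbar V, bounded_set V, convexS V &
        (interior (setMinus Omega1 (Omega2 `&` V))) 0].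
Proof.
move=> _ cO1 cO2 v1 v2 _ hc xbar xO.
have [q [rho [rho0 hq]]] := K_baire _ _ _ v1 v2 xO hc.
have [t t0 Kt] := K_absorb _ _ _ v1 v2 xO hc (- q).
pose lam := (1 + t)^-1.
have t1 : 0 < 1 + t by rewrite addr_gt0.
have lam0 : 0 <= lam by rewrite invr_ge0 ltW.
have lamt : 1 - lam = lam * t.
  by rewrite /lam; field; rewrite gt_eqF.
have lam1 : lam <= 1.
  by rewrite -subr_ge0 lamt mulr_ge0 // ltW.
pose eps := t * rho / (1 + t).
have eps0 : 0 < eps by rewrite /eps !mulr_gt0 // invr_gt0.
have HD : forall y, `|y| < eps -> exists a b, Omega1 a /\ Omega2 b /\
    `|xbar - b| < 1 /\ `|y - (a - b)| < eps / 2.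
  move=> y hy.
  pose wv := ((1 + t) / t) *: y + q.
  have hw : `|wv - q| < rho.
    rewrite /wv addrK normrZ ger0_norm ?divr_ge0 ?ltW //.
    rewrite -ltr_pdivlMl ?divr_gt0 // invfM invrK mulrC.
    suff -> : rho * ((1 + t)^-1 * t) = eps by [].
    by rewrite /eps; ring.
  have [z [Kz hz]] := hq wv hw (eps / 2) (divr_gt0 eps0 (ltr0Sn _ 1)).
  have := K_convex _ _ _ v1 v2 _ _ _ lam0 lam1 Kt Kz.
  move=> [a [b [ha [[hb bb] e]]]].
  exists a, b; split => //; split => //; split => //.
  rewrite -e.
  have e1 : (1 - lam) *: wv = y + (lam * t) *: q.
    rewrite /wv scalerDr scalerA lamt.
    have -> : lam * t * ((1 + t) / t) = 1.
      by rewrite /lam; field; rewrite !gt_eqF.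
    by rewrite scale1r.
  have -> : y - (lam *: (t *: - q) + (1 - lam) *: z) = (1 - lam) *: (wv - z).
    by rewrite scalerBr e1 scalerA scalerN opprD opprK addrA.
  rewrite normrZ ger0_norm ?subr_ge0 //.
  by rewrite (le_lt_trans _ hz) // ler_piMl //; lra.
have HI := iter_lemma _ _ _ _ _ _ cO1 cO2 v1 v2 eps0 xO HD.
exists (ball xbar 2); split.
- by apply: nbhsx_ballx.
- rewrite /= /bounded_near; near=> M => x /=; rewrite -ball_normE /= => hx.
  have hb : `|x| <= `|xbar| + 2.
    have -> : x = xbar - (xbar - x) by rewrite opprB addrC subrK.
    by rewrite (le_trans (ler_normB _ _)) // (lerD (lexx _) (ltW hx)).
  apply: (le_trans hb).
  by near: M; apply: nbhs_pinfty_ge; rewrite num_real.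
- by rewrite -ball_normE; exact: normball_convex.
- rewrite /interior /=; apply/nbhs_ballP; exists (eps / 2); first exact: (divr_gt0 eps0 (ltr0Sn _ 1)).
  move=> z; rewrite -ball_normE /= sub0r normrN => hz.
  have hy : `|2 *: z| < eps.
    by rewrite normrZ ger0_norm // mulrC -ltr_pdivlMr.
  have [a [b [ha [hb [bb e]]]]] := HI _ hy.
  exists a, b; split => //; split; last by rewrite -e scalerA mulVf ?scale1r.
  split => //; rewrite /ball_ /=; apply: (le_lt_trans bb); lra.
Unshelve. all: by end_near.
Qed.
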